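(* Let $m\ge n$, $B\in\mathbb R^{n\times m}$ of full row rank, $f,h$ convex and continuously differentiable with Lipschitz gradients, $\mathcal L(u,p)=f(u)-h(p)+(Bu,p)$ with saddle point $(u^*,p^* )$, and $T_{\mathcal U},\mathcal I_{\mathcal V}$ ($m\times m$), $T_{\mathcal P},\mathcal I_{\mathcal Q}$ ($n\times n$) symmetric positive definite. Suppose $h\in\mathcal S^{1,1}_{\mu_{h,T_{\mathcal P}},L_{h,T_{\mathcal P}}}$ w.r.t. $T_{\mathcal P}$ with $L_{h,T_{\mathcal P}}\le1$, $f\in\mathcal S^{1,1}_{\mu_{f,T_{\mathcal U}},L_{f,T_{\mathcal U}}}$ w.r.t. $T_{\mathcal U}$ with $L_{f,T_{\mathcal U}}\le1$, $f_B$ is strongly convex w.r.t. $\mathcal I_{\mathcal V}$ with $\mu_{f_B,\mathcal I_{\mathcal V}}>0$, and $h_B$ is strongly convex w.r.t. $\mathcal I_{\mathcal Q}$ with $\mu_{h_B,\mathcal I_{\mathcal Q}}>0$. Let $(u_k,p_k)$ be generated from $(u_0,p_0)$ by $$u_{k+1/2}=u_k-T_{\mathcal U}^{-1}(\nabla f(u_k)+B^\top p_k),\quad p_{k+1}=p_k-\alpha_k\mathcal I_{\mathcal Q}^{-1}(\nabla h(p_k)-Bu_{k+1/2}),\quad u_{k+1}=\arg\min_{u\in\mathbb R^m}\tilde f_B(u;u_k,p_{k+1}),$$ where $\tilde f_B(u;u_k,p_{k+1})=f_B(u)+\frac1{2\alpha_k}\|u-u_k+\alpha_k\mathcal I_{\mathcal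 V}^{-1}B^\top(p_{k+1}-T_{\mathcal P}^{-1}\nabla h(p_{k+1}))\|^2_{\mathcal I_{\mathcal V}}$. Then for $0<\alpha_k<\mu_{h_B,\mathcal I_{\mathcal Q}}/L_{S,\mathcal Q}^2$, $$\mathcal E(u_{k+1},p_{k+1})\le\frac1{1+\alpha_k\mu_k}\mathcal E(u_k,p_k),\qquad \mu_k=\min\{\mu_{f_B,\mathcal I_{\mathcal V}},\ \mu_{h_B,\mathcal I_{\mathcal Q}}-\alpha_kL_{S,\mathcal Q}^2\},$$ where $L_{S,\mathcal Q}^2=L_{h_B,\mathcal I_{\mathcal Q}}^2+L_{e_{\mathcal U},\mathcal I_{\mathcal V}}^2L_S^2$. In particular, for $\alpha_k=0.5\mu_{h_B,\mathcal I_{\mathcal Q}}/L_{S,\mathcal Q}^2$, $$\mathcal E(u_{k+1},p_{k+1})\le\frac{1}{1+0.5\,\mu_{h_B,\mathcal I_{\mathcal Q}}\min\{\mu_{f_B,\mathcal I_{\mathcal V}},\mu_{h_B,\mathcal I_{\mathcal Q}}/2\}/L_{S,\mathcal Q}^2}\mathcal E(u_k,p_k).$$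
   Context: A saddle point satisfies $\nabla f(u^* )+B^\top p^*=0$, $Bu^*=\nabla h(p^* )$. For SPD $M$, $\|x\|_M=(Mx,x)^{1/2}$; $D_g(y,x)=g(y)-g(x)-(\nabla g(x),y-x)$; $g\in\mathcal S^{1,1}_{\mu_{g,M},L_{g,M}}$ w.r.t. $M$ means $\frac{\mu_{g,M}}2\|x-y\|_M^2\le D_g(y,x)\le\frac{L_{g,M}}2\|x-y\|_M^2$ for all $x,y$. Define $f_B(u)=f(u)+\frac12(B^\top T_{\mathcal P}^{-1}Bu,u)$, $h_B(p)=h(p)+\frac12(BT_{\mathcal U}^{-1}B^\top p,p)$, $e_{\mathcal U}(u)=u-T_{\mathcal U}^{-1}\nabla f(u)$, $\mathcal E(u,p)=\frac12\|u-u^*\|^2_{\mathcal I_{\mathcal V}}+\frac12\|p-p^*\|^2_{\mathcal I_{\mathcal Q}}$. $L_{h_B,\mathcal I_{\mathcal Q}}$ is the Lipschitz constant of $\nabla h_B$ ($\|\nabla h_B(p_1)-\nabla h_B(p_2)\|_{\mathcal I_{\mathcal Q}^{-1}}\le L_{h_B,\mathcal I_{\mathcal Q}}\|p_1-p_2\|_{\mathcal I_{\mathcal Q}}$), $L_{e_{\mathcal U},\mathcal I_{\mathcal V}}$ the Lipschitz constant of $e_{\mathcal U}$ in $\|\cdot\|_{\mathcal I_{\mathcal V}}$, and $L_S^2=\lambda_{\max}(\mathcal I_{\mathcal Q}^{-1}B\mathcal I_{\mathcal V}^{-1}B^\top)$. *)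

(* Defs.v *)
From HB Require Import structures.
From mathcomp Require Import all_boot all_order all_algebra.
From mathcomp Require Import all_classical all_reals all_analysis.
Set Implicit Arguments. Unset Strict Implicit. Unset Printing Implicit Defensive.
Import Order.TTheory GRing.Theory Num.Theory.
Import numFieldNormedType.Exports.
Local Open Scope ring_scope.

Definition dotv (R : realType) (k : nat) (x y : 'cV[R]_k) : R := (x^T *m y) 0 0.

Definition spd (R : realType) (k : nat) (M : 'M[R]_k) : Prop :=
  M^T = M /\ forall x : 'cV[R]_k, x != 0 -> 0 < dotv (M *m x) x.

Definition normM (R : realType) (k : nat) (M : 'M[R]_k) (x : 'cV[R]_k) : R :=
  Num.sqrt (dotv (M *m x) x).

Definition C1_with_grad (R : realType) (k : nat) (g : 'cV[R]_k -> R)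
    (gg : 'cV[R]_k -> 'cV[R]_k) : Prop :=
  (forall x v : 'cV[R]_k, is_derive x v g (dotv (gg x) v)) /\ continuous gg.

Definition convex_fun (R : realType) (k : nat) (g : 'cV[R]_k -> R) : Prop :=
  forall (x y : 'cV[R]_k) (t : R), 0 <= t <= 1 ->
    g (t *: x + (1 - t) *: y) <= t * g x + (1 - t) * g y.

(* gradient Lipschitz (w.r.t. some norm; all norms are equivalent in R^k) *)
Definition lipschitz_grad (R : realType) (k : nat) (gg : 'cV[R]_k -> 'cV[R]_k) : Prop :=
  exists L : R, forall x y, `|gg x - gg y| <= L * `|x - y|.

Definition bregman (R : realType) (k : nat) (g : 'cV[R]_k -> R)
    (gg : 'cV[R]_k -> 'cV[R]_k) (y x : 'cV[R]_k) : R :=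
  g y - g x - dotv (gg x) (y - x).

Definition S11 (R : realType) (k : nat) (M : 'M[R]_k) (mu L : R)
    (g : 'cV[R]_k -> R) (gg : 'cV[R]_k -> 'cV[R]_k) : Prop :=
  forall x y : 'cV[R]_k,
    mu / 2 * normM M (x - y) ^+ 2 <= bregman g gg y x /\
    bregman g gg y x <= L / 2 * normM M (x - y) ^+ 2.

Definition strongly_convex_wrt (R : realType) (k : nat) (M : 'M[R]_k) (mu : R)
    (g : 'cV[R]_k -> R) (gg : 'cV[R]_k -> 'cV[R]_k) : Prop :=
  forall x y : 'cV[R]_k, mu / 2 * normM M (x - y) ^+ 2 <= bregman g gg y x.

Definition lipschitz_wrt (R : realType) (k l : nat) (M1 : 'M[R]_k) (M2 : 'M[R]_l)
    (F : 'cV[R]_k -> 'cV[R]_l) (L : R) : Prop :=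
  forall x y, normM M2 (F x - F y) <= L * normM M1 (x - y).

Definition lipschitz_const (R : realType) (k l : nat) (M1 : 'M[R]_k) (M2 : 'M[R]_l)
    (F : 'cV[R]_k -> 'cV[R]_l) (L : R) : Prop :=
  lipschitz_wrt M1 M2 F L /\ forall L', lipschitz_wrt M1 M2 F L' -> L <= L'.

Definition lambda_max (R : realType) (k : nat) (A : 'M[R]_k) (lam : R) : Prop :=
  eigenvalue A lam /\ forall a, eigenvalue A a -> a <= lam.

Definition fB (R : realType) (m n : nat) (f : 'cV[R]_m -> R) (B : 'M[R]_(n, m))
    (TP : 'M[R]_n) (u : 'cV[R]_m) : R :=
  f u + 1 / 2 * dotv (B^T *m invmx TP *m B *m u) u.
Definition grad_fB (R : realType) (m n : nat) (gf : 'cV[R]_m -> 'cV[R]_m)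
    (B : 'M[R]_(n, m)) (TP : 'M[R]_n) (u : 'cV[R]_m) : 'cV[R]_m :=
  gf u + B^T *m invmx TP *m B *m u.

Definition hB (R : realType) (m n : nat) (h : 'cV[R]_n -> R) (B : 'M[R]_(n, m))
    (TU : 'M[R]_m) (p : 'cV[R]_n) : R :=
  h p + 1 / 2 * dotv (B *m invmx TU *m B^T *m p) p.
Definition grad_hB (R : realType) (m n : nat) (gh : 'cV[R]_n -> 'cV[R]_n)
    (B : 'M[R]_(n, m)) (TU : 'M[R]_m) (p : 'cV[R]_n) : 'cV[R]_n :=
  gh p + B *m invmx TU *m B^T *m p.

Definition eU (R : realType) (m : nat) (gf : 'cV[R]_m -> 'cV[R]_m) (TU : 'M[R]_m)
    (u : 'cV[R]_m) : 'cV[R]_m :=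
  u - invmx TU *m gf u.

Definition Lyap (R : realType) (m n : nat) (IV : 'M[R]_m) (IQ : 'M[R]_n)
    (us : 'cV[R]_m) (ps : 'cV[R]_n) (u : 'cV[R]_m) (p : 'cV[R]_n) : R :=
  1 / 2 * normM IV (u - us) ^+ 2 + 1 / 2 * normM IQ (p - ps) ^+ 2.

Definition tfB (R : realType) (m n : nat) (f : 'cV[R]_m -> R)
    (gh : 'cV[R]_n -> 'cV[R]_n) (B : 'M[R]_(n, m)) (TP : 'M[R]_n) (IV : 'M[R]_m)
    (alpha : R) (uk : 'cV[R]_m) (pk1 : 'cV[R]_n) (u : 'cV[R]_m) : R :=
  fB f B TP u + 1 / (2 * alpha) *
    normM IV (u - uk + alpha *: (invmx IV *m B^T *m (pk1 - invmx TP *m gh pk1))) ^+ 2.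

(* Main.v *)
Require Import Defs.
From HB Require Import structures.
From mathcomp Require Import all_boot all_order all_algebra.
From mathcomp Require Import all_classical all_reals all_analysis.
From mathcomp Require Import ring lra.
Import Order.TTheory GRing.Theory Num.Theory.
Local Open Scope ring_scope.

Set Implicit Arguments. Unset Strict Implicit.

Section FileA.
Import numFieldNormedType.Exports.
Local Open Scope classical_set_scope.
Local Open Scope ring_scope.

Section Dot.
Variable R : realType.

Lemma dotvC k (x y : 'cV[R]_k) : dotv x y = dotv y x.
Proof.
rewrite /dotv !mxE; apply: eq_bigr => i _; rewrite !mxE mulrC //.
Qed.

Lemma dotvDl k (x y z : 'cV[R]_k) : dotv (x + y) z = dotv x z + dotv y z.
Proof. by rewrite /dotv linearD mulmxDl mxE. Qed.

Lemma dotvDr k (x y z : 'cV[R]_k) : dotv z (x + y) = dotv z x + dotv z y.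
Proof. by rewrite /dotv mulmxDr mxE. Qed.

Lemma dotvZl k a (x z : 'cV[R]_k) : dotv (a *: x) z = a * dotv x z.
Proof. by rewrite /dotv linearZ /= -scalemxAl mxE. Qed.

Lemma dotvZr k a (x z : 'cV[R]_k) : dotv z (a *: x) = a * dotv z x.
Proof. by rewrite /dotv -scalemxAr mxE. Qed.

Lemma dotvNl k (x z : 'cV[R]_k) : dotv (- x) z = - dotv x z.
Proof. by rewrite -scaleN1r dotvZl mulN1r. Qed.

Lemma dotvNr k (x z : 'cV[R]_k) : dotv z (- x) = - dotv z x.
Proof. by rewrite -scaleN1r dotvZr mulN1r. Qed.

Lemma dotvBl k (x y z : 'cV[R]_k) : dotv (x - y) z = dotv x z - dotv y z.
Proof. by rewrite dotvDl dotvNl. Qed.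

Lemma dotvBr k (x y z : 'cV[R]_k) : dotv z (x - y) = dotv z x - dotv z y.
Proof. by rewrite dotvDr dotvNr. Qed.

Lemma dotv0l k (z : 'cV[R]_k) : dotv 0 z = 0.
Proof. by rewrite /dotv linear0 mul0mx mxE. Qed.

Lemma dotv0r k (z : 'cV[R]_k) : dotv z 0 = 0.
Proof. by rewrite /dotv mulmx0 mxE. Qed.

Lemma dotv_mul k l (A : 'M[R]_(k, l)) (x : 'cV[R]_l) (y : 'cV[R]_k) :
  dotv (A *m x) y = dotv x (A^T *m y).
Proof. by rewrite /dotv trmx_mul mulmxA. Qed.

Lemma dotv_self_ge0 k (x : 'cV[R]_k) : 0 <= dotv x x.
Proof.
rewrite /dotv mxE; apply: sumr_ge0 => i _; rewrite mxE -expr2; exact: sqr_ge0.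
Qed.

Lemma dotv_self_eq0 k (x : 'cV[R]_k) : dotv x x = 0 -> x = 0.
Proof.
rewrite /dotv mxE => /eqP; rewrite psumr_eq0; last first.
  by move=> i _; rewrite mxE -expr2 sqr_ge0.
move=> /allP H; apply/matrixP => i j; rewrite (ord1 j) !mxE.
have := H i (mem_index_enum _); rewrite mxE -expr2 /= sqrf_eq0 => /eqP //.
Qed.

End Dot.

End FileA.

Section FileB.
Import numFieldNormedType.Exports.
Local Open Scope classical_set_scope.
Local Open Scope ring_scope.

Section Spd.
Variable R : realType.

Lemma spd_ge0 k (M : 'M[R]_k) x : spd M -> 0 <= dotv (M *m x) x.
Proof.
move=> [_ H]; have [->|x0] := eqVneq x 0; first by rewrite mulmx0 dotv0l.
exact/ltW/H.
Qed.

Lemma spd_unit k (M : 'M[R]_k) : spd M -> M \in unitmx.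
Proof.
move=> [Ms H]; rewrite unitmxE unitfE; apply/negP => /det0P [v v0 vM].
have x0 : v^T != 0 by rewrite -(inj_eq (@trmx_inj _ _ _)) trmxK trmx0.
have := H _ x0; rewrite -{1}Ms -trmx_mul vM trmx0 dotv0l ltxx //.
Qed.

Lemma spd_inv_sym k (M : 'M[R]_k) : spd M -> (invmx M)^T = invmx M.
Proof. by move=> [Ms _]; rewrite trmx_inv Ms. Qed.

Lemma spd_inv_ge0 k (M : 'M[R]_k) x : spd M -> 0 <= dotv (invmx M *m x) x.
Proof.
move=> sM; have uM := spd_unit sM.
rewrite -{2}(mulKVmx uM x) dotvC; exact: spd_ge0.
Qed.

Lemma normM_sq k (M : 'M[R]_k) x : spd M -> normM M x ^+ 2 = dotv (M *m x) x.
Proof. by move=> sM; rewrite /normM sqr_sqrtr // spd_ge0. Qed.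

Lemma normM_ge0 k (M : 'M[R]_k) x : 0 <= normM M x.
Proof. exact: sqrtr_ge0. Qed.

Lemma spd_sym_dot k (M : 'M[R]_k) x y : spd M -> dotv (M *m x) y = dotv x (M *m y).
Proof. by move=> [Ms _]; rewrite dotv_mul Ms. Qed.

Lemma spd_inv_sym_dot k (M : 'M[R]_k) x y : spd M ->
  dotv (invmx M *m x) y = dotv x (invmx M *m y).
Proof. by move=> sM; rewrite dotv_mul spd_inv_sym. Qed.

Lemma young_dual k (M : 'M[R]_k) w z s : spd M -> 0 < s ->
  2 * dotv w z <= s * dotv (invmx M *m w) w + s^-1 * dotv (M *m z) z.
Proof.
move=> sM s0; have uM := spd_unit sM.
set y := s *: (invmx M *m w) - z.
have := spd_ge0 y sM.
rewrite /y mulmxBr dotvBl !dotvBr -!scalemxAr !dotvZl !dotvZr mulKVmx //.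
rewrite (spd_sym_dot z (invmx M *m w) sM) (mulKVmx uM) (dotvC z w).
rewrite (dotvC (invmx M *m w) w).
set a := dotv w (invmx M *m w); set b := dotv (M *m z) z; set c := dotv w z.
move=> H.
have E : s^-1 * (s * (s * a) - s * c - (s * c - b)) = s * a + s^-1 * b - 2 * c.
  by field; exact: lt0r_neq0.
have : 0 <= s^-1 * (s * (s * a) - s * c - (s * c - b)).
  by apply: mulr_ge0 => //; rewrite invr_ge0 ltW.
rewrite E; lra.
Qed.

End Spd.

End FileB.

Section FileC.
Import numFieldNormedType.Exports.
Local Open Scope classical_set_scope.
Local Open Scope ring_scope.

Section Cvx.
Variable R : realType.

Lemma convex_bregman_ge0 k (g : 'cV[R]_k -> R) gg :
  C1_with_grad g gg -> convex_fun g -> forall y x, 0 <= bregman g gg y x.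
Proof.
move=> [Hd _] Hc y x.
have [Hder Hval] := Hd x (y - x).
set q := fun t : R => t^-1 *: ((g \o shift x) (t *: (y - x)) - g x).
have Hcv : q t @[t --> 0^'] --> dotv (gg x) (y - x).
  by rewrite -Hval; exact: Hder.
have Hr : q t @[t --> 0^'+] --> dotv (gg x) (y - x) by exact: cvg_dnbhs_at_right.
have Hl : lim (q t @[t --> 0^'+]) = dotv (gg x) (y - x) by exact: cvg_lim.
rewrite /bregman -Hl subr_ge0 -[X in _ <= X]subr0 subr0.
apply: limr_le; first by apply/cvg_ex; eexists; exact: Hr.
near=> t.
have t0 : 0 < t by near: t; exact: nbhs_right_gt.
have t1 : t <= 1 by apply: ltW; near: t; exact: nbhs_right_lt.
rewrite /q /= /shift.
have E : t *: (y - x) + x = t *: y + (1 - t) *: x.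
  by rewrite scalerBr scalerBl scale1r addrA addrAC [_ + x]addrC addrA [x + _]addrC.
rewrite E.
have := Hc y x t; rewrite t1 ltW //= => /(_ isT) H.
rewrite -ler_pdivlMl //.
  rewrite invrK.
  have -> : t * (g y - g x) = t * g y + (1 - t) * g x - g x by ring.
  lra.
by rewrite invr_gt0.
Unshelve. all: end_near.
Qed.

End Cvx.

End FileC.

Section FileD.
Import numFieldNormedType.Exports.
Local Open Scope classical_set_scope.
Local Open Scope ring_scope.

Section Coco.
Variable R : realType.

Lemma S11_upper k (M : 'M[R]_k) mu L g gg : spd M -> S11 M mu L g gg -> L <= 1 ->
  forall y x, bregman g gg y x <= 1 / 2 * dotv (M *m (y - x)) (y - x).
Proof.
move=> sM H L1 y x; have [_ H2] := H x y.
apply: (le_trans H2); rewrite normM_sq // -opprB mulmxN dotvNl dotvNr opprK.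
have := spd_ge0 (y - x) sM; nra.
Qed.

Lemma cocoercive_half k (M : 'M[R]_k) mu L g gg : spd M -> C1_with_grad g gg ->
  convex_fun g -> S11 M mu L g gg -> L <= 1 -> forall y x,
  1 / 2 * dotv (gg y - gg x) (invmx M *m (gg y - gg x)) <= bregman g gg y x.
Proof.
move=> sM Hd Hc H L1 y x; have uM := spd_unit sM.
set w := gg y - gg x; set z := y - invmx M *m w.
have H1 := convex_bregman_ge0 Hd Hc z x.
have H2 := S11_upper sM H L1 z y.
have Eyz : z - y = - (invmx M *m w) by rewrite /z addrAC subrr add0r.
move: H1 H2; rewrite /bregman Eyz mulmxN dotvNl dotvNr opprK (mulKVmx uM).
have Ezx : z - x = (y - x) - invmx M *m w by rewrite /z addrAC.
rewrite Ezx !dotvBr !dotvNr.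
have : dotv (gg y) (invmx M *m w) - dotv (gg x) (invmx M *m w) = dotv w (invmx M *m w).
  by rewrite /w dotvBl.
lra.
Qed.

Lemma cocoercive k (M : 'M[R]_k) mu L g gg : spd M -> C1_with_grad g gg ->
  convex_fun g -> S11 M mu L g gg -> L <= 1 -> forall y x,
  dotv (gg y - gg x) (invmx M *m (gg y - gg x)) <= dotv (gg y - gg x) (y - x).
Proof.
move=> sM Hd Hc H L1 y x.
have H1 := cocoercive_half sM Hd Hc H L1 y x.
have H2 := cocoercive_half sM Hd Hc H L1 x y.
move: H1 H2; rewrite /bregman -(opprB (gg y)) mulmxN dotvNl dotvNr opprK.
rewrite -(opprB y x) !dotvNr dotvBl. rewrite dotvBl. lra.
Qed.

End Coco.

End FileD.

Section FileE.
Import numFieldNormedType.Exports.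
Local Open Scope classical_set_scope.
Local Open Scope ring_scope.

Section Ray.
Variable R : realType.

Lemma sum_continuous (T : topologicalType) (I : Type) (s : seq I) (F : I -> T -> R) :
  (forall i, continuous (F i)) -> continuous (fun x => \sum_(i <- s) F i x).
Proof.
move=> HF; elim: s => [|i s IH].
  under eq_fun do rewrite big_nil; exact: cst_continuous.
under eq_fun do rewrite big_cons.
move=> x; apply: continuousD; [exact: HF | exact: IH].
Qed.

Lemma mul_continuous (T : topologicalType) (f g : T -> R) :
  continuous f -> continuous g -> continuous (fun x => f x * g x).
Proof. move=> cf cg x; apply: cvgM; [exact: cf | exact: cg]. Qed.

Lemma qf_expand n (A : 'M[R]_n) (w : 'rV[R]_n) :
  dotv (A *m w^T) w^T = \sum_(j < n) (\sum_(l < n) A j l * w 0 l) * w 0 j.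
Proof.
rewrite /dotv mxE; apply: eq_bigr => j _; rewrite !mxE; congr (_ * _).
by apply: eq_bigr => l _; rewrite !mxE.
Qed.

Lemma qf_continuous n (A : 'M[R]_n) :
  continuous (fun w : 'rV[R]_n => dotv (A *m w^T) w^T).
Proof.
under eq_fun do rewrite qf_expand.
apply: sum_continuous => j; apply: mul_continuous; last exact: coord_continuous.
apply: sum_continuous => l; apply: mul_continuous; first exact: cst_continuous.
exact: coord_continuous.
Qed.


Definition qf n (A : 'M[R]_n) (w : 'rV[R]_n) := dotv (A *m w^T) w^T.

Lemma qfZ n (A : 'M[R]_n) a w : qf A (a *: w) = a ^+ 2 * qf A w.
Proof.
by rewrite /qf linearZ /= -scalemxAr dotvZl dotvZr mulrA expr2.
Qed.

Lemma qf0 n (A : 'M[R]_n) : qf A 0 = 0.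
Proof. by rewrite /qf trmx0 mulmx0 dotv0l. Qed.

Lemma quad_zero (a b : R) : (forall t, 0 <= 2 * t * a + t ^+ 2 * b) -> a = 0.
Proof.
move=> H; set c := `|b| + 1.
have c0 : 0 < c by rewrite /c ltr_pwDr // normr_ge0.
set t := - a / c.
have tc : t * c = - a by rewrite /t mulrVK // unitfE lt0r_neq0.
have := H t; have := ler_norm b; have := normr_ge0 b.
rewrite -/c => Hb1 Hb2 Ht.
have Hc : c = `|b| + 1 by [].
have : 0 <= c ^+ 2 * (2 * t * a + t ^+ 2 * b) by apply: mulr_ge0 => //; exact: sqr_ge0.
have -> : c ^+ 2 * (2 * t * a + t ^+ 2 * b) = 2 * (t * c) * a * c + (t * c) ^+ 2 * b by ring.
rewrite tc => H2.
apply/eqP; apply: contraT => a0.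
have a2 : 0 < a ^+ 2 by rewrite lt_def sqrf_eq0 a0 sqr_ge0.
nra.
Qed.


Lemma qf_spd_pos n (Q : 'M[R]_n) w : spd Q -> w != 0 -> 0 < qf Q w.
Proof.
move=> [_ H] w0; apply: H.
by rewrite -(inj_eq (@trmx_inj _ _ _)) trmxK trmx0.
Qed.

Lemma rV_nonzero n : exists v : 'rV[R]_n.+1, v != 0.
Proof.
exists (const_mx 1); apply/eqP => /matrixP /(_ 0 0); rewrite !mxE => /eqP.
by rewrite oner_eq0.
Qed.

Lemma bounded_by n (A : set 'rV[R]_n) c : (forall w, A w -> `|w| <= c) -> bounded_set A.
Proof.
move=> H; exists c; split; first by rewrite num_real.
move=> M cM w Aw /=; apply: (le_trans (H w Aw)); exact: ltW.
Qed.

Lemma qf_lower n (Q : 'M[R]_n) : spd Q ->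
  exists m0, 0 < m0 /\ forall w : 'rV[R]_n, m0 * `|w| ^+ 2 <= qf Q w.
Proof.
move=> sQ; case: n Q sQ => [|n] Q sQ.
  by exists 1; split => // w; rewrite thinmx0 normr0 qf0 expr0n mulr0.
set S := [set w : 'rV[R]_n.+1 | `|w| = 1].
have [v v0] := rV_nonzero n.
have nv0 : 0 < `|v| by rewrite normr_gt0.
have S0 : S !=set0.
  exists (`|v|^-1 *: v); rewrite /S /= normrZ normrV ?unitfE ?lt0r_neq0 //.
  by rewrite normr_id mulVf // lt0r_neq0.
have cS : compact S.
  apply: bounded_closed_compact.
    by apply: (@bounded_by _ _ 1) => w; rewrite /S /= => ->.
  have -> : S = (@Num.norm _ _) @^-1` [set x | x = 1] by [].
  by apply: (proj1 (continuous_closedP _)); [exact: norm_continuous | exact: closed_eq].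
have [c cS_ Hc] := EVT_min_rV S0 cS (continuous_subspaceT (qf_continuous (A:=Q) : continuous (qf Q))).
move: cS_; rewrite inE /S /= => c1.
have c0 : c != 0 by apply/eqP => c0; move: c1; rewrite c0 normr0 => /eqP; rewrite eq_sym oner_eq0.
exists (qf Q c); split; first exact: qf_spd_pos.
move=> w; have [->|w0] := eqVneq w 0; first by rewrite normr0 qf0 expr0n mulr0.
have nw0 : 0 < `|w| by rewrite normr_gt0.
have := Hc (`|w|^-1 *: w).
rewrite inE /S /= normrZ normrV ?unitfE ?lt0r_neq0 // normr_id mulVf ?lt0r_neq0 //.
move=> /(_ erefl); rewrite qfZ.
move=> H; have := ler_wpM2r (ltW (exprn_gt0 2 nw0)) H.
have -> : `|w|^-1 ^+ 2 * qf Q w * `|w| ^+ 2 = qf Q w.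
  by field; exact: lt0r_neq0.
done.
Qed.


Lemma qf_max n (G Q : 'M[R]_n.+1) : spd Q ->
  exists lam, exists2 c : 'rV[R]_n.+1, qf Q c = 1 /\ qf G c = lam &
     forall w, qf G w <= lam * qf Q w.
Proof.
move=> sQ; have [m0 [m0p Hm0]] := qf_lower sQ.
set S := [set w : 'rV[R]_n.+1 | qf Q w = 1].
have [v v0] := rV_nonzero n.
have qv0 := qf_spd_pos sQ v0.
have S0 : S !=set0.
  exists ((Num.sqrt (qf Q v))^-1 *: v); rewrite /S /= qfZ exprVn sqr_sqrtr ?(ltW qv0) //.
  by rewrite mulVf // lt0r_neq0.
have cS : compact S.
  apply: bounded_closed_compact.
    apply: (@bounded_by _ _ (1 + m0^-1)) => w; rewrite /S /= => Hw.
    have := Hm0 w; rewrite Hw => H.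
    have := normr_ge0 w; set x := `|w| => x0.
    have E : m0 * m0^-1 = 1 by rewrite mulfV // lt0r_neq0.
    have m0i : 0 < m0^-1 by rewrite invr_gt0.
    have H2 : x ^+ 2 <= m0^-1.
      have := ler_wpM2l (ltW m0i) H; rewrite mulr1 mulrA mulVf ?lt0r_neq0 // mul1r.
      done.
    have : x <= 1 + x ^+ 2 by nra.
    lra.
  have -> : S = (qf Q) @^-1` [set x | x = 1] by [].
  apply: (proj1 (continuous_closedP _)); last exact: closed_eq.
  exact: (qf_continuous (A:=Q) : continuous (qf Q)).
have [c cS_ Hc] := EVT_max_rV S0 cS (continuous_subspaceT (qf_continuous (A:=G) : continuous (qf G))).
move: cS_; rewrite inE /S /= => c1.
exists (qf G c); exists c => //.
move=> w; have [->|w0] := eqVneq w 0; first by rewrite !qf0 mulr0.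
have qw0 := qf_spd_pos sQ w0.
set s := (Num.sqrt (qf Q w))^-1.
have Sw : s *: w \in S.
  rewrite inE /S /= qfZ /s exprVn sqr_sqrtr ?(ltW qw0) //.
  by rewrite mulVf // lt0r_neq0.
have := Hc _ Sw; rewrite qfZ /s exprVn sqr_sqrtr ?(ltW qw0) // => H.
have := ler_wpM2r (ltW qw0) H.
have -> : (qf Q w)^-1 * qf G w * qf Q w = qf G w by field; exact: lt0r_neq0.
done.
Qed.


Lemma rayleigh n (G Q : 'M[R]_n) lam : spd Q -> G^T = G ->
  (forall x, 0 <= dotv (G *m x) x) -> lambda_max (invmx Q *m G) lam ->
  0 <= lam /\ forall x, dotv (G *m x) x <= lam * dotv (Q *m x) x.
Proof.
case: n G Q => [|n] G Q sQ Gs Gpos [Hev Hmax].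
  by move: Hev => /eigenvalueP [v _]; rewrite thinmx0 eqxx.
have [lam0 [c [c1 c2] Hc]] := qf_max G sQ.
have Hcol : forall y : 'cV[R]_n.+1, dotv (G *m y) y <= lam0 * dotv (Q *m y) y.
  by move=> y; have := Hc y^T; rewrite /qf trmxK.
set x := c^T.
have Qs : Q^T = Q by case: sQ.
set M := lam0 *: Q - G.
have Ms : M^T = M by rewrite /M linearB linearZ /= Qs Gs.
have Mx0 : dotv (M *m x) x = 0.
  rewrite /M mulmxBl -scalemxAl dotvBl dotvZl.
  by move: c1 c2; rewrite /qf -/x => -> ->; rewrite mulr1 subrr.
have Mpos : forall y, 0 <= dotv (M *m y) y.
  by move=> y; rewrite /M mulmxBl -scalemxAl dotvBl dotvZl subr_ge0.
have Hlin : forall y, dotv (M *m x) y = 0.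
  move=> y; apply: quad_zero (dotv (M *m y) y) _ => t.
  have := Mpos (x + t *: y).
  rewrite mulmxDr -scalemxAr !dotvDl !dotvDr !dotvZl !dotvZr Mx0.
  rewrite (dotv_mul M y x) Ms (dotvC y).
  have -> : 2 * t * dotv (M *m x) y + t ^+ 2 * dotv (M *m y) y =
    0 + t * dotv (M *m x) y + (t * dotv (M *m x) y + t * (t * dotv (M *m y) y)) by ring.
  done.
have Mx : M *m x = 0 by apply: dotv_self_eq0; exact: Hlin.
have uQ := spd_unit sQ.
have x0 : x != 0.
  apply/eqP => x0; move: c1; rewrite /qf -/x x0 mulmx0 dotv0l => /eqP.
  by rewrite eq_sym oner_eq0.
have Gx : G *m x = lam0 *: (Q *m x).
  by move: Mx; rewrite /M mulmxBl -scalemxAl => /eqP; rewrite subr_eq0 => /eqP <-.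
set N := invmx Q *m G - lam0%:M.
have Nx : N *m x = 0.
  rewrite /N mulmxBl -mulmxA Gx -scalemxAr (mulKmx uQ) mul_scalar_mx subrr //.
have detN : \det N == 0.
  rewrite -det_tr; apply/det0P; exists x^T.
    by rewrite -(inj_eq (@trmx_inj _ _ _)) trmxK trmx0.
  by rewrite -trmx_mul Nx trmx0.
have ev : eigenvalue (invmx Q *m G) lam0.
  apply/eigenvalueP; move: detN => /det0P [v v0 vN]; exists v => //.
  by move: vN; rewrite /N mulmxBr mul_mx_scalar => /eqP; rewrite subr_eq0 => /eqP.
have l0 := Hmax _ ev.
have lam0p : 0 <= lam0 by move: c2; rewrite /qf => <-; exact: Gpos.
split; first exact: le_trans l0.
move=> y; apply: (le_trans (Hcol y)); apply: ler_wpM2r => //; exact: spd_ge0.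
Qed.

End Ray.

End FileE.

Section FileF.
Import numFieldNormedType.Exports.
Local Open Scope classical_set_scope.
Local Open Scope ring_scope.

Section F.
Variable R : realType.

Lemma normMN k (M : 'M[R]_k) x : normM M (- x) = normM M x.
Proof. by rewrite /normM mulmxN dotvNl dotvNr opprK. Qed.

Lemma normMB k (M : 'M[R]_k) x y : normM M (x - y) = normM M (y - x).
Proof. by rewrite -normMN opprB. Qed.

Lemma spd_eq0 k (M : 'M[R]_k) x : spd M -> dotv (M *m x) x = 0 -> x = 0.
Proof.
move=> [_ H] E; apply/eqP; apply: contraT => x0.
by have := H x x0; rewrite E ltxx.
Qed.

Lemma spd_inv_eq0 k (M : 'M[R]_k) x : spd M -> dotv (invmx M *m x) x = 0 -> x = 0.
Proof.
move=> sM E; have uM := spd_unit sM.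
have : invmx M *m x = 0.
  apply: (spd_eq0 sM); rewrite (mulKVmx uM) dotvC; exact: E.
by move=> /(congr1 (mulmx M)); rewrite (mulKVmx uM) mulmx0.
Qed.

Lemma cs_dual k (M : 'M[R]_k) w z : spd M ->
  dotv w z <= normM (invmx M) w * normM M z.
Proof.
move=> sM; have uM := spd_unit sM.
set a := dotv (invmx M *m w) w; set b := dotv (M *m z) z.
have a0 : 0 <= a := spd_inv_ge0 w sM.
have b0 : 0 <= b := spd_ge0 z sM.
rewrite /normM -/a -/b.
set A := Num.sqrt a; set Bn := Num.sqrt b.
have A0 : 0 <= A := sqrtr_ge0 a. have B0 : 0 <= Bn := sqrtr_ge0 b.
have AA : A ^+ 2 = a by rewrite sqr_sqrtr.
have BB : Bn ^+ 2 = b by rewrite sqr_sqrtr.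
have [Az|Anz] := eqVneq A 0.
  have : a = 0 by rewrite -AA Az expr0n.
  move=> /(spd_inv_eq0 sM) ->; rewrite dotv0l Az mul0r //.
have [Bz|Bnz] := eqVneq Bn 0.
  have : b = 0 by rewrite -BB Bz expr0n.
  move=> /(spd_eq0 sM) ->; rewrite dotv0r Bz mulr0 //.
have AB0 : 0 < A * Bn by rewrite mulr_gt0 // lt_def ?Anz ?Bnz.
set y := Bn *: (invmx M *m w) - A *: z.
have := spd_ge0 y sM.
rewrite /y mulmxBr dotvBl !dotvBr -!scalemxAr !dotvZl !dotvZr (mulKVmx uM).
rewrite (spd_sym_dot z (invmx M *m w) sM) (mulKVmx uM) (dotvC z w).
have -> : dotv w (invmx M *m w) = a by rewrite /a dotvC.
rewrite -/b -AA -BB => H.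
have H2 : A * Bn * dotv w z <= A * Bn * (A * Bn) by nra.
by rewrite -(ler_pM2l AB0).
Qed.

Lemma sc_sum k (M : 'M[R]_k) mu g gg : spd M -> strongly_convex_wrt M mu g gg ->
  forall x y, mu * dotv (M *m (y - x)) (y - x) <= dotv (gg y - gg x) (y - x).
Proof.
move=> sM H x y; have H1 := H x y; have H2 := H y x.
move: H1 H2; rewrite /bregman normMB !normM_sq // dotvBl.
rewrite -(opprB y x) !dotvNr. lra.
Qed.


Lemma Bq_sym m n (B : 'M[R]_(n, m)) (TP : 'M[R]_n) : spd TP ->
  (B^T *m invmx TP *m B)^T = B^T *m invmx TP *m B.
Proof.
move=> sP; rewrite !trmx_mul trmxK (spd_inv_sym sP) mulmxA //.
Qed.

Lemma quad_expand k (M : 'M[R]_k) (x v : 'cV[R]_k) t : M^T = M ->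
  dotv (M *m (x + t *: v)) (x + t *: v) =
  dotv (M *m x) x + 2 * t * dotv (M *m x) v + t ^+ 2 * dotv (M *m v) v.
Proof.
move=> Ms; rewrite mulmxDr -scalemxAr !dotvDl !dotvDr !dotvZl !dotvZr.
rewrite (dotv_mul M v x) Ms (dotvC v (M *m x)); ring.
Qed.

Lemma opt_cond m n (B : 'M[R]_(n, m)) f gf gh TU IV TP mu L alpha u0 p1 u1 :
  spd TU -> spd IV -> spd TP -> S11 TU mu L f gf -> L <= 1 -> 0 < alpha ->
  (forall v, tfB f gh B TP IV alpha u0 p1 u1 <= tfB f gh B TP IV alpha u0 p1 v) ->
  forall v, dotv (gf u1) v + dotv (B^T *m invmx TP *m B *m u1) v
    + alpha^-1 * dotv (IV *m (u1 - u0)) v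
    + dotv (B^T *m (p1 - invmx TP *m gh p1)) v = 0.
Proof.
move=> sU sV sP Hf L1 a0 Hmin v.
have uV := spd_unit sV.
have Bqs := Bq_sym B sP.
suff : forall t, 0 <= 2 * t * ((dotv (gf u1) v + dotv (B^T *m invmx TP *m B *m u1) v
    + alpha^-1 * dotv (IV *m (u1 - u0)) v
    + dotv (B^T *m (p1 - invmx TP *m gh p1)) v) / 2) +
    t ^+ 2 * (1 / 2 * dotv (TU *m v) v + 1 / 2 * dotv (B^T *m invmx TP *m B *m v) v
    + 1 / (2 * alpha) * dotv (IV *m v) v).
  by move=> /quad_zero /eqP; rewrite mulf_eq0 invr_eq0 pnatr_eq0 orbF => /eqP.
move=> t.
have Hm := Hmin (u1 + t *: v).
have Hup := S11_upper sU Hf L1 (u1 + t *: v) u1.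
have E1 : u1 + t *: v - u1 = t *: v by rewrite addrAC subrr add0r.
move: Hm Hup; rewrite /tfB /fB E1 /bregman !normM_sq //.
set r := p1 - invmx TP *m gh p1.
set z := alpha *: (invmx IV *m B^T *m r).
have E2 : u1 + t *: v - u0 + z = (u1 - u0 + z) + t *: v.
  by rewrite -!addrA; congr (_ + _); rewrite addrC -addrA.
rewrite E2.
have Hw : dotv (IV *m (u1 - u0 + z)) v = dotv (IV *m (u1 - u0)) v + alpha * dotv (B^T *m r) v.
  by rewrite mulmxDr dotvDl /z -scalemxAr -!mulmxA (mulKVmx uV) dotvZl.
move: Hw; set w := u1 - u0 + z; clearbody w.
set Bq := B^T *m invmx TP *m B in Bqs *; clearbody Bq.
move=> Hw.
rewrite E1 !quad_expand ?(proj1 sV) // Hw -!scalemxAr !dotvZl !dotvZr.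
have Hai : alpha * alpha^-1 = 1 by rewrite mulfV // lt0r_neq0.
set x1 := dotv (gf u1) v; set x2 := dotv (Bq *m u1) v; set x3 := dotv (IV *m (u1 - u0)) v.
set x4 := dotv (B^T *m r) v; set y1 := dotv (TU *m v) v; set y2 := dotv (Bq *m v) v.
set y3 := dotv (IV *m v) v.
move=> Hm Hup.
have E3 : 1 / (2 * alpha) * (2 * t * (x3 + alpha * x4)) = t * (alpha^-1 * x3 + x4).
  by field; exact: lt0r_neq0.
nra.
Qed.

End F.

End FileF.

Section FileG.
Import numFieldNormedType.Exports.
Local Open Scope classical_set_scope.
Local Open Scope ring_scope.

Section G.
Variable R : realType.

Lemma sub3 k l (a b c a' b' c' : 'M[R]_(k, l)) :
  (a + b + c) - (a' + b' + c') = (a - a') + (b - b') + (c - c').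
Proof. by apply/matrixP => i j; rewrite !mxE; ring. Qed.


Lemma one_step m n (B : 'M[R]_(n, m)) f gf h gh TU IV TP IQ us ps
    mu_hTP L_hTP mu_fTU L_fTU mu_fB mu_hB L_hB L_eU LS2 u0 p0 u1 p1 alpha :
  spd TU -> spd IV -> spd TP -> spd IQ ->
  C1_with_grad f gf -> convex_fun f -> C1_with_grad h gh -> convex_fun h ->
  gf us + B^T *m ps = 0 -> B *m us = gh ps ->
  S11 TP mu_hTP L_hTP h gh -> L_hTP <= 1 -> S11 TU mu_fTU L_fTU f gf -> L_fTU <= 1 ->
  strongly_convex_wrt IV mu_fB (fB f B TP) (grad_fB gf B TP) ->
  strongly_convex_wrt IQ mu_hB (hB h B TU) (grad_hB gh B TU) ->
  lipschitz_wrt IQ (invmx IQ) (grad_hB gh B TU) L_hB ->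
  lipschitz_wrt IV IV (eU gf TU) L_eU ->
  (forall q, dotv (B *m invmx IV *m B^T *m q) q <= LS2 * dotv (IQ *m q) q) ->
  p1 = p0 - alpha *: (invmx IQ *m (gh p0 - B *m (u0 - invmx TU *m (gf u0 + B^T *m p0)))) ->
  (forall v, tfB f gh B TP IV alpha u0 p1 u1 <= tfB f gh B TP IV alpha u0 p1 v) ->
  0 < alpha ->
  Lyap IV IQ us ps u1 p1 *
    (1 + alpha * Num.min mu_fB (mu_hB - alpha * (L_hB ^+ 2 + L_eU ^+ 2 * LS2)))
  <= Lyap IV IQ us ps u0 p0.
Proof.
move=> sU sV sP sQ Cf cvf Ch cvh S1 S2 HSh Lh1 HSf Lf1 scf sch LipH LipE Ray Hp Hmin a0.
have uU := spd_unit sU; have uV := spd_unit sV; have uP := spd_unit sP; have uQ := spd_unit sQ.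
set du1 := u1 - us; set dp1 := p1 - ps.
set F1 := gf u1 - gf us; set H1 := gh p1 - gh ps.
have O := opt_cond sU sV sP HSf Lf1 a0 Hmin du1.
have Sv : gf us + B^T *m invmx TP *m B *m us + B^T *m (ps - invmx TP *m gh ps) = 0.
  rewrite -!mulmxA S2 mulmxBr -S1.
  move: (gf us) (B^T *m ps) (B^T *m (invmx TP *m gh ps)) => a c b.
  by apply/matrixP => i j; rewrite !mxE; ring.
have Vd : (gf u1 + B^T *m invmx TP *m B *m u1 + B^T *m (p1 - invmx TP *m gh p1))
   - (gf us + B^T *m invmx TP *m B *m us + B^T *m (ps - invmx TP *m gh ps))
   = F1 + B^T *m (invmx TP *m (B *m du1)) + B^T *m (dp1 - invmx TP *m H1).
  rewrite sub3 -!mulmxBr -/F1 -/du1 -!mulmxA; congr (_ + _ + _ *m _).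
  by rewrite /dp1 /H1 mulmxBr; apply/matrixP => i j; rewrite !mxE; ring.
move: Vd; rewrite Sv subr0 => Vd.
have I1 : dotv F1 du1 + dotv (invmx TP *m (B *m du1)) (B *m du1)
    + alpha^-1 * dotv (IV *m (u1 - u0)) du1
    + dotv dp1 (B *m du1) - dotv (invmx TP *m H1) (B *m du1) = 0.
  have E : dotv (gf u1) du1 + dotv (B^T *m invmx TP *m B *m u1) du1
      + dotv (B^T *m (p1 - invmx TP *m gh p1)) du1 =
      dotv F1 du1 + dotv (invmx TP *m (B *m du1)) (B *m du1)
      + dotv dp1 (B *m du1) - dotv (invmx TP *m H1) (B *m du1).
    rewrite -!dotvDl Vd dotvDl dotvDl !(dotv_mul B^T) !trmxK [dotv (dp1 - _) _]dotvBl; ring.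
  move: O E; lra.
have S1' : gf us = - (B^T *m ps) by apply/eqP; rewrite -addr_eq0 S1.
have XV : gh p0 - B *m (u0 - invmx TU *m (gf u0 + B^T *m p0)) =
   H1 + B *m (invmx TU *m (B^T *m dp1)) - (grad_hB gh B TU p1 - grad_hB gh B TU p0)
   - B *m du1 + B *m (invmx TU *m F1) + B *m (eU gf TU u1 - eU gf TU u0).
  rewrite /H1 /dp1 /du1 /F1 /grad_hB /eU -S2 S1'.
  do ![rewrite mulmxBr | rewrite mulmxDr | rewrite mulmxN]; rewrite !mulmxA.
  by apply/matrixP => i j; rewrite !mxE; ring.
have IQd : IQ *m (p1 - p0) = - (alpha *: (gh p0 - B *m (u0 - invmx TU *m (gf u0 + B^T *m p0)))).
  by rewrite Hp addrAC subrr add0r mulmxN -scalemxAr (mulKVmx uQ).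
have I2 : dotv (IQ *m (p1 - p0)) dp1 = - alpha * (dotv H1 dp1
    + dotv (B *m (invmx TU *m (B^T *m dp1))) dp1
    - dotv (grad_hB gh B TU p1 - grad_hB gh B TU p0) dp1 - dotv (B *m du1) dp1
    + dotv (B *m (invmx TU *m F1)) dp1 + dotv (B *m (eU gf TU u1 - eU gf TU u0)) dp1).
  rewrite IQd XV.
  move: (H1) (B *m (invmx TU *m (B^T *m dp1))) (grad_hB gh B TU p1 - grad_hB gh B TU p0) (B *m du1) (B *m (invmx TU *m F1)) (B *m (eU gf TU u1 - eU gf TU u0)) => a b c d e g.
  rewrite dotvNl dotvZl !dotvDl !dotvNl; ring.
rewrite !(dotv_mul B) in I2.
have Fi : mu_fB * dotv (IV *m du1) du1 <=
    dotv F1 du1 + dotv (invmx TP *m (B *m du1)) (B *m du1).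
  have := sc_sum sV scf us u1; rewrite -/du1.
  have -> : grad_fB gf B TP u1 - grad_fB gf B TP us = F1 + B^T *m (invmx TP *m (B *m du1)).
    rewrite /grad_fB /F1 /du1 !mulmxBr !mulmxA.
    move: (gf u1) (gf us) (B^T *m invmx TP *m B *m u1) (B^T *m invmx TP *m B *m us) => a b c d.
    by apply/matrixP => i j; rewrite !mxE; ring.
  by rewrite dotvDl (dotv_mul B^T) trmxK.
have Hi : mu_hB * dotv (IQ *m dp1) dp1 <=
    dotv H1 dp1 + dotv (invmx TU *m (B^T *m dp1)) (B^T *m dp1).
  have := sc_sum sQ sch ps p1; rewrite -/dp1.
  have -> : grad_hB gh B TU p1 - grad_hB gh B TU ps = H1 + B *m (invmx TU *m (B^T *m dp1)).
    rewrite /grad_hB /H1 /dp1 !mulmxBr !mulmxA.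
    move: (gh p1) (gh ps) (B *m invmx TU *m B^T *m p1) (B *m invmx TU *m B^T *m ps) => a b c d.
    by apply/matrixP => i j; rewrite !mxE; ring.
  by rewrite dotvDl (dotv_mul B).
have cf : dotv F1 (invmx TU *m F1) <= dotv F1 du1 := cocoercive sU Cf cvf HSf Lf1 u1 us.
have ch : dotv H1 (invmx TP *m H1) <= dotv H1 dp1 := cocoercive sP Ch cvh HSh Lh1 p1 ps.
have v5 : 0 <= dotv (invmx TP *m (B *m du1)) (B *m du1)
    - 2 * dotv (invmx TP *m H1) (B *m du1) + dotv H1 (invmx TP *m H1).
  have := spd_inv_ge0 (B *m du1 - H1) sP.
  move: (B *m du1) (H1) => x y.
  rewrite mulmxBr !dotvBl !dotvBr (spd_inv_sym_dot x y sP) (dotvC x (invmx TP *m y)).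
  rewrite (dotvC (invmx TP *m y) y); lra.
have v6 : 0 <= dotv F1 (invmx TU *m F1) + 2 * dotv (invmx TU *m F1) (B^T *m dp1)
    + dotv (invmx TU *m (B^T *m dp1)) (B^T *m dp1).
  have := spd_inv_ge0 (F1 + B^T *m dp1) sU.
  move: (F1) (B^T *m dp1) => x y.
  rewrite mulmxDr !dotvDl !dotvDr (spd_inv_sym_dot y x sU) (dotvC y (invmx TU *m x)).
  rewrite (dotvC (invmx TU *m x) x); lra.
have v7 : dotv (grad_hB gh B TU p1 - grad_hB gh B TU p0) dp1 <=
    L_hB * normM IQ (p1 - p0) * normM IQ dp1.
  apply: (le_trans (cs_dual _ _ sQ)); apply: ler_wpM2r; first exact: normM_ge0.
  exact: LipH.
have v8 : - dotv (eU gf TU u1 - eU gf TU u0) (B^T *m dp1) <=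
    L_eU * normM IV (u0 - u1) * normM (invmx IV) (B^T *m dp1).
  rewrite -dotvNl opprB dotvC.
  apply: (le_trans (cs_dual _ _ sV)); rewrite mulrC; apply: ler_wpM2r; first exact: normM_ge0.
  exact: LipE.
have v9 : normM (invmx IV) (B^T *m dp1) ^+ 2 <= LS2 * dotv (IQ *m dp1) dp1.
  rewrite /normM sqr_sqrtr; last exact: spd_inv_ge0.
  by rewrite -(dotv_mul B) !mulmxA; exact: Ray.
have pc : dotv dp1 (B *m du1) = dotv du1 (B^T *m dp1) by rewrite dotvC dotv_mul.
have EV : dotv (IV *m (u0 - us)) (u0 - us) = dotv (IV *m du1) du1
    - 2 * dotv (IV *m (u1 - u0)) du1 + dotv (IV *m (u1 - u0)) (u1 - u0).
  have -> : u0 - us = du1 - (u1 - u0).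
    by rewrite /du1; apply/matrixP => i j; rewrite !mxE; ring.
  move: (du1) (u1 - u0) => x y.
  rewrite mulmxBr !dotvBl !dotvBr (spd_sym_dot x y sV) (dotvC x (IV *m y)); ring.
have EQ : dotv (IQ *m (p0 - ps)) (p0 - ps) = dotv (IQ *m dp1) dp1
    - 2 * dotv (IQ *m (p1 - p0)) dp1 + dotv (IQ *m (p1 - p0)) (p1 - p0).
  have -> : p0 - ps = dp1 - (p1 - p0).
    by rewrite /dp1; apply/matrixP => i j; rewrite !mxE; ring.
  move: (dp1) (p1 - p0) => x y.
  rewrite mulmxBr !dotvBl !dotvBr (spd_sym_dot x y sQ) (dotvC x (IQ *m y)); ring.
have Vn2 : normM IV (u0 - u1) ^+ 2 = dotv (IV *m (u1 - u0)) (u1 - u0).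
  by rewrite normMB normM_sq.
have An2 : normM IQ (p1 - p0) ^+ 2 = dotv (IQ *m (p1 - p0)) (p1 - p0) by rewrite normM_sq.
have Pn2 : normM IQ dp1 ^+ 2 = dotv (IQ *m dp1) dp1 by rewrite normM_sq.
have Vn0 := normM_ge0 IV (u0 - u1); have An0 := normM_ge0 IQ (p1 - p0).
have Pn0 := normM_ge0 IQ dp1; have Wn0 := normM_ge0 (invmx IV) (B^T *m dp1).
have a1p := spd_ge0 du1 sV; have b1p := spd_ge0 dp1 sQ.
rewrite /Lyap !normM_sq // EV EQ -/du1 -/dp1.
move: I1 I2 Fi Hi cf ch v5 v6 v7 v8 v9 pc Vn2 An2 Pn2 Vn0 An0 Pn0 Wn0 a1p b1p.
set a1 := dotv (IV *m du1) du1; set b1 := dotv (IQ *m dp1) dp1.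
set nVD := dotv (IV *m (u1 - u0)) (u1 - u0); set nQD := dotv (IQ *m (p1 - p0)) (p1 - p0).
set IVd := dotv (IV *m (u1 - u0)) du1; set IQd' := dotv (IQ *m (p1 - p0)) dp1.
set fdu := dotv F1 du1; set c2 := dotv (invmx TP *m (B *m du1)) (B *m du1).
set dcp := dotv (invmx TP *m H1) (B *m du1); set pc1 := dotv dp1 (B *m du1).
set hdp := dotv H1 dp1; set b2 := dotv (invmx TU *m (B^T *m dp1)) (B^T *m dp1).
set Xw := dotv (grad_hB gh B TU p1 - grad_hB gh B TU p0) dp1.
set pcu := dotv du1 (B^T *m dp1); set abp := dotv (invmx TU *m F1) (B^T *m dp1).
set Yv := dotv (eU gf TU u1 - eU gf TU u0) (B^T *m dp1).
set a2 := dotv F1 (invmx TU *m F1); set d2 := dotv H1 (invmx TP *m H1).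
set Vn := normM IV (u0 - u1); set An := normM IQ (p1 - p0); set Pn := normM IQ dp1.
set Wn := normM (invmx IV) (B^T *m dp1).
set LSQ2 := L_hB ^+ 2 + L_eU ^+ 2 * LS2.
set mk := Num.min mu_fB (mu_hB - alpha * LSQ2).
move=> I1 I2 Fi Hi cf ch v5 v6 v7 v8 v9 pc Vn2 An2 Pn2 Vn0 An0 Pn0 Wn0 a1p b1p.
have ai : alpha * alpha^-1 = 1 by rewrite mulfV // lt0r_neq0.
have I1' : alpha * fdu + alpha * c2 + IVd + alpha * pc1 - alpha * dcp = 0.
  have : alpha * (fdu + c2 + alpha^-1 * IVd + pc1 - dcp) = 0 by rewrite I1 mulr0.
  have -> : alpha * (fdu + c2 + alpha^-1 * IVd + pc1 - dcp) =
    alpha * fdu + alpha * c2 + (alpha * alpha^-1) * IVd + alpha * pc1 - alpha * dcp by ring.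
  by rewrite ai mul1r.
have hS : 1 / 2 * mu_fB * a1 + 1 / 2 * mu_hB * b1 <= fdu + c2 - dcp + hdp + b2 + abp by lra.
have ha := ltW a0.
have hS' : alpha * (1 / 2 * mu_fB * a1 + 1 / 2 * mu_hB * b1) <=
    alpha * (fdu + c2 - dcp + hdp + b2 + abp) by apply: ler_wpM2l.
have hT1 : alpha * Xw <= 1 / 2 * nQD + 1 / 2 * alpha ^+ 2 * L_hB ^+ 2 * b1.
  have h1 : alpha * Xw <= alpha * (L_hB * An * Pn) by apply: ler_wpM2l.
  have h2 : 0 <= (An - alpha * L_hB * Pn) ^+ 2 := sqr_ge0 _.
  rewrite -An2 -Pn2; nra.
have hT2 : - (alpha * Yv) <= 1 / 2 * nVD + 1 / 2 * alpha ^+ 2 * L_eU ^+ 2 * LS2 * b1.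
  have h1 : alpha * (- Yv) <= alpha * (L_eU * Vn * Wn) by apply: ler_wpM2l.
  have h2 : 0 <= (Vn - alpha * L_eU * Wn) ^+ 2 := sqr_ge0 _.
  have h3 : alpha ^+ 2 * L_eU ^+ 2 * Wn ^+ 2 <= alpha ^+ 2 * L_eU ^+ 2 * (LS2 * b1).
    apply: ler_wpM2l => //; apply: mulr_ge0; exact: sqr_ge0.
  rewrite -Vn2; nra.
have mk1 : mk <= mu_fB by rewrite /mk ge_min lexx.
have mk2 : mk <= mu_hB - alpha * LSQ2 by rewrite /mk ge_min lexx orbT.
have hm1 : alpha * mk * a1 <= alpha * mu_fB * a1.
  by apply: ler_wpM2r => //; apply: ler_wpM2l.
have hm2 : alpha * mk * b1 <= alpha * (mu_hB - alpha * LSQ2) * b1.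
  by apply: ler_wpM2r => //; apply: ler_wpM2l.
have hL : alpha * (mu_hB - alpha * LSQ2) * b1 =
  alpha * mu_hB * b1 - alpha ^+ 2 * L_hB ^+ 2 * b1 - alpha ^+ 2 * L_eU ^+ 2 * LS2 * b1.
  by rewrite /LSQ2; ring.
nra.
Qed.

End G.

End FileG.

Lemma lambda_max_pos (R : realType) n (A : 'M[R]_n) lam : lambda_max A lam -> (0 < n)%N.
Proof.
by case: n A => [|n] A [/eigenvalueP [v _]]; rewrite ?thinmx0 ?eqxx.
Qed.

Lemma cV_nonzero (R : realType) n : (0 < n)%N -> exists x : 'cV[R]_n, x != 0.
Proof.
move=> n0; exists (const_mx 1); apply/eqP => /matrixP /(_ (Ordinal n0) 0).
by rewrite !mxE => /eqP; rewrite oner_eq0.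
Qed.

Unset Implicit Arguments. Set Strict Implicit.

Theorem theorem5p6 (R : realType) (m n : nat) (B : 'M[R]_(n, m))
    (f : 'cV[R]_m -> R) (gf : 'cV[R]_m -> 'cV[R]_m)
    (h : 'cV[R]_n -> R) (gh : 'cV[R]_n -> 'cV[R]_n)
    (TU IV : 'M[R]_m) (TP IQ : 'M[R]_n)
    (us : 'cV[R]_m) (ps : 'cV[R]_n)
    (mu_hTP L_hTP mu_fTU L_fTU mu_fB mu_hB L_hB L_eU LS2 : R)
    (u : nat -> 'cV[R]_m) (p : nat -> 'cV[R]_n) (alpha : nat -> R) :
  (n <= m)%N ->
  \rank B = n ->
  C1_with_grad f gf -> convex_fun f -> lipschitz_grad gf ->
  C1_with_grad h gh -> convex_fun h -> lipschitz_grad gh ->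
  (* (us, ps) is a saddle point of L(u,p) = f(u) - h(p) + (Bu, p) *)
  gf us + B^T *m ps = 0 -> B *m us = gh ps ->
  spd TU -> spd IV -> spd TP -> spd IQ ->
  S11 TP mu_hTP L_hTP h gh -> L_hTP <= 1 ->
  S11 TU mu_fTU L_fTU f gf -> L_fTU <= 1 ->
  strongly_convex_wrt IV mu_fB (fB f B TP) (grad_fB gf B TP) -> 0 < mu_fB ->
  strongly_convex_wrt IQ mu_hB (hB h B TU) (grad_hB gh B TU) -> 0 < mu_hB ->
  lipschitz_const IQ (invmx IQ) (grad_hB gh B TU) L_hB ->
  lipschitz_const IV IV (eU gf TU) L_eU ->
  lambda_max (invmx IQ *m B *m invmx IV *m B^T) LS2 ->
  (* the iteration *)
  (forall k, p (k.+1) = p k - alpha k *: (invmx IQ *m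
       (gh (p k) - B *m (u k - invmx TU *m (gf (u k) + B^T *m p k))))) ->
  (forall k (v : 'cV[R]_m),
       tfB f gh B TP IV (alpha k) (u k) (p k.+1) (u k.+1)
       <= tfB f gh B TP IV (alpha k) (u k) (p k.+1) v) ->
  let LSQ2 := L_hB ^+ 2 + L_eU ^+ 2 * LS2 in
  (forall k, 0 < alpha k < mu_hB / LSQ2 ->
     Lyap IV IQ us ps (u k.+1) (p k.+1)
     <= 1 / (1 + alpha k * Num.min mu_fB (mu_hB - alpha k * LSQ2))
        * Lyap IV IQ us ps (u k) (p k)) /\
  (forall k, alpha k = 1 / 2 * mu_hB / LSQ2 ->
     Lyap IV IQ us ps (u k.+1) (p k.+1)
     <= 1 / (1 + 1 / 2 * mu_hB * Num.min mu_fB (mu_hB / 2) / LSQ2)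
        * Lyap IV IQ us ps (u k) (p k)).
Proof.
move=> _ _ Cf cvf _ Ch cvh _ S1 S2 sU sV sP sQ HSh Lh1 HSf Lf1 scf mf0 sch mh0
  [LipH _] [LipE _] Hlam Hp Hmin LSQ2.
have n0 := lambda_max_pos Hlam.
have Gs : (B *m invmx IV *m B^T)^T = B *m invmx IV *m B^T.
  by rewrite !trmx_mul trmxK (spd_inv_sym sV) mulmxA.
have Gp : forall x, 0 <= dotv (B *m invmx IV *m B^T *m x) x.
  by move=> x; rewrite -!mulmxA dotv_mul; exact: spd_inv_ge0.
have Hlam2 : lambda_max (invmx IQ *m (B *m invmx IV *m B^T)) LS2 by rewrite !mulmxA.
have [LS0 Ray] := rayleigh sQ Gs Gp Hlam2.
have part1 : forall k, 0 < alpha k < mu_hB / LSQ2 ->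
     Lyap IV IQ us ps (u k.+1) (p k.+1)
     <= 1 / (1 + alpha k * Num.min mu_fB (mu_hB - alpha k * LSQ2))
        * Lyap IV IQ us ps (u k) (p k).
  move=> k /andP [a0 a1].
  have L0 : 0 <= LSQ2.
    by rewrite /LSQ2 addr_ge0 ?sqr_ge0 // mulr_ge0 ?sqr_ge0.
  have Lp : 0 < LSQ2.
    rewrite lt_def L0 andbT; apply/eqP => L00.
    by move: a1; rewrite L00 invr0 mulr0 => /(lt_trans a0); rewrite ltxx.
  have aL : alpha k * LSQ2 < mu_hB by rewrite -ltr_pdivlMr.
  have mkp : 0 < Num.min mu_fB (mu_hB - alpha k * LSQ2).
    by rewrite lt_min mf0 subr_gt0 aL.
  have D0 : 0 < 1 + alpha k * Num.min mu_fB (mu_hB - alpha k * LSQ2).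
    by rewrite addr_gt0 // mulr_gt0.
  have := one_step sU sV sP sQ Cf cvf Ch cvh S1 S2 HSh Lh1 HSf Lf1 scf sch LipH LipE Ray
    (Hp k) (Hmin k) a0.
  rewrite -/LSQ2 => H.
  by rewrite div1r mulrC ler_pdivlMr.
split => // k ak.
have [x x0] := cV_nonzero R n0.
have qx := spd_ge0 x sQ.
have qx0 : 0 < dotv (IQ *m x) x by case: sQ => _ H; exact: H.
have LhB : mu_hB <= L_hB.
  have H1 := sc_sum sQ sch 0 x.
  have H2 := cs_dual (grad_hB gh B TU x - grad_hB gh B TU 0) x sQ.
  have H3 := LipH x 0.
  move: H1 H2 H3; rewrite !subr0 => H1 H2 H3.
  have H4 : normM (invmx IQ) (grad_hB gh B TU x - grad_hB gh B TU 0) * normM IQ x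
      <= L_hB * normM IQ x * normM IQ x by apply: ler_wpM2r => //; exact: normM_ge0.
  have : L_hB * normM IQ x * normM IQ x = L_hB * dotv (IQ *m x) x.
    by rewrite -mulrA -expr2 normM_sq.
  move=> E; rewrite E in H4.
  have H5 : mu_hB * dotv (IQ *m x) x <= L_hB * dotv (IQ *m x) x by lra.
  by rewrite -(ler_pM2r qx0).
have Lp : 0 < LSQ2.
  have : 0 < L_hB ^+ 2 by rewrite exprn_gt0 // (lt_le_trans mh0 LhB).
  have : 0 <= L_eU ^+ 2 * LS2 by rewrite mulr_ge0 ?sqr_ge0.
  rewrite /LSQ2; lra.
have H := part1 k.
have Ea : mu_hB - alpha k * LSQ2 = mu_hB / 2.
  by rewrite ak; field; exact: lt0r_neq0.
have Eb : alpha k * Num.min mu_fB (mu_hB / 2) = 1 / 2 * mu_hB * Num.min mu_fB (mu_hB / 2) / LSQ2.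
  by rewrite ak; field; exact: lt0r_neq0.
rewrite -Eb -Ea; apply: H; apply/andP; split.
  by rewrite ak mulr_gt0 // ?invr_gt0 // mulr_gt0.
rewrite ak ltr_pM2r ?invr_gt0 //; lra.
Qed.
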